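(* Let $d\in\mathbb{N}$, $0<A\le1$, and let $f$ be a measurable function on $[0,1]^d$. Then $$\|f\|^{(1)}_{2,A}\le\|f\|_{2,A}\le4\,\|f\|^{(1)}_{2,A},$$ where $\|f\|^{(1)}_{2,A}=\sup_{0<t<1}\frac{f^*(t)}{\sqrt{A\log(1/t)+1}}$ and $\|f\|_{2,A}=\inf\{\lambda>0:\int_{[0,1]^d}\Phi_{2,A}(|f(x)|/\lambda)\,dx\le1\}$.
   Context: $\Phi_{2,A}(u)=u^2$ for $0\le u\le1$ and $\Phi_{2,A}(u)=\exp\big((u^2-1)/A\big)$ for $u>1$. $f^*(t)=\inf\{s\ge0:|\{x\in[0,1]^d:|f(x)|>s\}|\le t\}$ is the non-increasing rearrangement of $f$ with respect to Lebesgue measure. *)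

(* Defs.v *)
From HB Require Import structures.
From mathcomp Require Import all_boot all_order all_algebra.
From mathcomp Require Import all_classical all_reals all_analysis.
Set Implicit Arguments. Unset Strict Implicit. Unset Printing Implicit Defensive.
Import Order.TTheory GRing.Theory Num.Theory.
Local Open Scope classical_set_scope.
Local Open Scope ring_scope.

(* Points of R^n are n.-tuples of reals, with the product (= Borel) sigma-algebra. *)

Definition unit_cube (R : realType) (n : nat) : set (n.-tuple R) :=
  [set x | forall i : 'I_n, 0 <= tnth x i <= 1].
Arguments unit_cube : clear implicits.

(* mu is n-dimensional Lebesgue measure: it gives every closed box its volume.
   (This determines mu uniquely on the Borel sets of R^n.) *)
Definition is_lebesgue_measure_n (R : realType) (n : nat)
    (mu : {measure set (n.-tuple R) -> \bar R}) : Prop :=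
  forall a b : n.-tuple R, (forall i, tnth a i <= tnth b i) ->
    mu [set x | forall i : 'I_n, tnth a i <= tnth x i <= tnth b i]
    = (\prod_(i < n) (tnth b i - tnth a i))%:E.

Definition Phi2A (R : realType) (A u : R) : R :=
  if u <= 1 then u ^+ 2 else expR ((u ^+ 2 - 1) / A).

Definition distrib (R : realType) (n : nat)
    (mu : {measure set (n.-tuple R) -> \bar R}) (f : n.-tuple R -> R) (s : R)
    : \bar R :=
  mu (unit_cube R n `&` [set x | s < `|f x|]).

Definition rearr (R : realType) (n : nat)
    (mu : {measure set (n.-tuple R) -> \bar R}) (f : n.-tuple R -> R) (t : R)
    : \bar R :=
  ereal_inf [set s%:E | s in [set s : R | 0 <= s /\ (distrib mu f s <= t%:E)%E]].

Definition norm1 (R : realType) (n : nat)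
    (mu : {measure set (n.-tuple R) -> \bar R}) (A : R) (f : n.-tuple R -> R)
    : \bar R :=
  ereal_sup [set (rearr mu f t * ((Num.sqrt (A * ln (t^-1) + 1))^-1)%:E)%E
            | t in [set t : R | 0 < t < 1]].

Definition luxnorm (R : realType) (n : nat)
    (mu : {measure set (n.-tuple R) -> \bar R}) (A : R) (f : n.-tuple R -> R)
    : \bar R :=
  ereal_inf [set l%:E | l in [set l : R | 0 < l /\
     (\int[mu]_(x in unit_cube R n) (Phi2A A (`|f x| / l))%:E <= 1)%E]].

(* Main.v *)
Require Import Defs.
From HB Require Import structures.
From mathcomp Require Import all_boot all_order all_algebra.
From mathcomp Require Import all_classical all_reals all_analysis.
From mathcomp Require Import ring lra zify.
Import measurable_realfun.
Import Order.TTheory GRing.Theory Num.Theory.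
Local Open Scope classical_set_scope.
Local Open Scope ring_scope.

Lemma Phi2A_ge0 (R : realType) (A u : R) : 0 <= Phi2A A u.
Proof. rewrite /Phi2A; case: ifP => _; [exact: sqr_ge0 | exact: expR_ge0]. Qed.

Lemma Phi2A_le (R : realType) (A u v : R) : 0 < A -> 0 <= u -> u <= v ->
  Phi2A A u <= Phi2A A v.
Proof.
move=> A0 u0 uv; rewrite /Phi2A.
have v0 : 0 <= v := le_trans u0 uv.
case: ifPn => u1; case: ifPn => v1.
- by rewrite ler_sqr.
- rewrite -ltNge in v1.
  apply: (@le_trans _ _ 1); first by rewrite expr_le1.
  apply: le_trans (expR_ge1Dx _); rewrite lerDl.
  apply: divr_ge0; last exact: ltW.
  rewrite subr_ge0 expr2; nra.
- by exfalso; move: u1; rewrite (le_trans uv v1).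
- rewrite ler_expR ler_pM2r ?invr_gt0 // lerD2r ler_sqr //.
Qed.

Lemma measurable_Phi2A (R : realType) (A : R) :
  measurable_fun [set: R] (Phi2A A).
Proof.
rewrite /Phi2A.
apply: measurable_fun_if => //.
- apply: (measurable_fun_bool true).
  rewrite setTI.
  have -> : (fun u : R => u <= 1) @^-1` [set true] = `]-oo, 1]%classic.
    by apply/seteqP; split => x /=; rewrite in_itv /=.
  exact: measurable_itv.
- have h : measurable_fun [set: R] (fun u : R => expR ((u ^+ 2 - 1) / A)).
    apply: (measurableT_comp (@measurable_expR R)).
    by apply: measurable_funM => //; apply: measurable_funB => //; apply: exprn_measurable.
  exact: (measurable_funS measurableT (@subsetT _ _) h).
Qed.


Lemma unit_cube_meas (R : realType) (n : nat) : measurable (unit_cube R n).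
Proof.
have -> : unit_cube R n = \bigcap_(i in [set: 'I_n])
   ([set: n.-tuple R] `&` (fun x : n.-tuple R => tnth x i) @^-1` `[(0:R), 1]).
  apply/seteqP; split => x /=.
    by move=> h i _; split => //; rewrite /= in_itv /=; exact: h.
  by move=> h i; have [_ ] := h i I; rewrite /= in_itv.
apply: fin_bigcap_measurable; first exact: finite_finset.
move=> i _; exact: measurable_tnth.
Qed.

Lemma mu_cube (R : realType) (n : nat) (mu : {measure set (n.-tuple R) -> \bar R}) :
  is_lebesgue_measure_n mu -> mu (unit_cube R n) = 1%E.
Proof.
move=> hmu.
have := hmu [tuple (0:R) | i < n] [tuple (1:R) | i < n].
have H : forall i : 'I_n, tnth [tuple (0:R) | i < n] i <= tnth [tuple (1:R) | i < n] i.
  by move=> i; rewrite !tnth_mktuple ler01.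
move=> /(_ H) hbox.
rewrite (_ : unit_cube R n = [set x | forall i : 'I_n,
    tnth [tuple (0:R) | i < n] i <= tnth x i <= tnth [tuple (1:R) | i < n] i]); last first.
  by apply/seteqP; split => x /= h i; have := h i; rewrite !tnth_mktuple.
rewrite hbox big1 // => i _; by rewrite !tnth_mktuple subr0.
Qed.


Lemma Phi_le1exp (R : realType) (A v : R) : 0 <= v ->
  Phi2A A v <= 1 + expR ((v ^+ 2 - 1) / A).
Proof.
move=> v0; rewrite /Phi2A; case: ifPn => v1.
  have := expR_ge0 ((v ^+ 2 - 1) / A); rewrite expr2; nra.
by rewrite lerDr; exact: ler01.
Qed.

Lemma div_ge_self (R : realType) (A Y : R) : 0 < A -> A <= 1 -> 0 <= Y -> Y <= Y / A.
Proof.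
move=> A0 A1 Y0; rewrite ler_pdivlMr //; nra.
Qed.

Lemma term_bound (R : realType) (A : R) (j : nat) : 0 < A -> A <= 1 ->
  Phi2A A (j.+3%:R / 4) * expR (- ((j.+2%:R) ^+ 2 - 1) / A)
  <= 2 * expR (-1) ^+ j.+3.
Proof.
move=> A0 A1.
have J0 : 0 <= j%:R :> R by [].
have e1 : expR (-1) ^+ j.+3 = expR (- j.+3%:R) :> R.
  by rewrite -expRM_natl mulrN1.
rewrite e1.
have v0 : 0 <= j.+3%:R / 4 :> R by rewrite divr_ge0.
apply: le_trans (ler_wpM2r (expR_ge0 _) (@Phi_le1exp R A _ v0)) _.
rewrite mulrDl mul1r -expRD [X in _ <= X](_ : _ = expR (- j.+3%:R) + expR (- j.+3%:R)); last by lra.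
apply: lerD; rewrite ler_expR.
- rewrite mulNr lerN2.
  apply: (le_trans _ (@div_ge_self R A _ A0 A1 _)); rewrite -!natr1; nra.
- rewrite -mulrDl.
  set X := j.+2%:R ^+ 2 - 1.
  set a := (j.+3%:R / 4) ^+ 2 - 1.
  have E : (a + - X) / A = - ((X - a) / A) by rewrite -mulNr; congr (_ * _); ring.
  rewrite E lerN2.
  have -> : X - a = (15 * j%:R ^+ 2 + 58 * j%:R + 55) / 16.
    by rewrite /X /a -!natr1; field.
  apply: (le_trans _ (@div_ge_self R A _ A0 A1 _)).
    rewrite ler_pdivlMr // -!natr1; nra.
  apply: divr_ge0 => //; nra.
Qed.

Definition hseq (R : realType) (k : nat) : R :=
  match k with 0 => 1/16 | 1 => 3/16 | k'.+2 => 2 * expR (-1) ^+ k'.+3 end.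

Lemma hseq_ge0 (R : realType) k : 0 <= hseq R k.
Proof.
case: k => [|[|k]] /=; try lra.
by rewrite mulr_ge0 // exprn_ge0 // expR_ge0.
Qed.

Lemma expRm1_le (R : realType) : expR (-1) <= (1/2 : R).
Proof.
rewrite expRN.
have h : 2 <= expR (1 : R) by have := expR_ge1Dx (1 : R); lra.
by rewrite mul1r lef_pV2 ?posrE ?expR_gt0.
Qed.

Lemma hseq_sum (R : realType) N : \sum_(0 <= k < N) hseq R k <= 3/4.
Proof.
set r := expR (-1 : R).
have r0 : 0 <= r by exact: expR_ge0.
have r1 : r <= 1/2 by exact: expRm1_le.
have key : forall M, \sum_(0 <= k < M.+2) hseq R k <= 3/4 - 4 * r ^+ M.+3.
  elim => [|M IH].
    rewrite big_nat_recr //= big_nat1 /=.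
    have : r ^+ 3 <= 1/8.
      have : r ^+ 3 <= (1/2) ^+ 3 by rewrite lerXn2r // nnegrE.
      by rewrite expr_div_n expr1n; lra.
    lra.
  rewrite big_nat_recr //=.
  have : r ^+ M.+4 = r * r ^+ M.+3 by rewrite exprS.
  have : 0 <= r ^+ M.+3 by exact: exprn_ge0.
  nra.
case: N => [|[|N]].
- rewrite big_geq //; lra.
- rewrite big_nat1 /=; lra.
- apply: le_trans (key N) _.
  have : 0 <= r ^+ N.+3 by exact: exprn_ge0.
  lra.
Qed.


Section Main.
Variables (R : realType) (n : nat) (mu : {measure set (n.-tuple R) -> \bar R}).
Variables (A : R) (f : n.-tuple R -> R).
Hypotheses (hmu : is_lebesgue_measure_n mu) (A0 : 0 < A) (A1 : A <= 1)
  (mf : measurable_fun (unit_cube R n) f).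

Let C := unit_cube R n.
Let mC : measurable C := unit_cube_meas R n.

Let mfa : measurable_fun C (fun x => `|f x|).
Proof. exact: (measurableT_comp (@normr_measurable R _) mf). Qed.

Lemma mlvl s : measurable (C `&` [set x | s < `|f x|]).
Proof.
have := mfa mC _ (measurable_itv `]s, +oo[).
congr measurable; apply/seteqP; split => x [Cx /= h]; split => //;
  by move: h; rewrite /= in_itv /= andbT.
Qed.

Lemma distrib_ge0 s : (0 <= distrib mu f s)%E.
Proof. exact: measure_ge0. Qed.

Lemma distrib_le1 s : (distrib mu f s <= 1)%E.
Proof.
rewrite -(@mu_cube R n mu hmu); apply: le_measure; rewrite ?inE.
- exact: mlvl.
- exact: mC.
- exact: subIsetl.
Qed.

Lemma distrib_anti s1 s2 : s1 <= s2 -> (distrib mu f s2 <= distrib mu f s1)%E.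
Proof.
move=> s12; apply: le_measure; rewrite ?inE; try exact: mlvl.
by move=> x [Cx h]; split => //=; apply: le_lt_trans h.
Qed.

Lemma mPhi l : measurable_fun C (fun x => (Phi2A A (`|f x| / l))%:E).
Proof.
apply/measurable_EFinP.
apply: (measurableT_comp (@measurable_Phi2A R A)).
apply: measurable_funM => //.
Qed.


Lemma cheb (t l : R) : 0 < t < 1 -> 0 < l ->
  (\int[mu]_(x in unit_cube R n) (Phi2A A (`|f x| / l))%:E <= 1)%E ->
  (distrib mu f (l * Num.sqrt (A * ln t^-1 + 1)) <= t%:E)%E.
Proof.
move=> /andP[t0 t1] l0 hint.
set g := Num.sqrt (A * ln t^-1 + 1).
have ti1 : 1 < t^-1 by rewrite invf_gt1.
have lnpos : 0 < ln t^-1 by apply: ln_gt0.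
have X0 : 0 <= A * ln t^-1 + 1 by rewrite addr_ge0 // mulr_ge0 // ltW.
have g1 : 1 < g.
  rewrite /g -[X in X < _]sqrtr1 ltr_sqrt; last by have := mulr_gt0 A0 lnpos; lra.
  by rewrite ltrDr mulr_gt0.
have g0 : 0 < g by apply: lt_trans g1.
have gsq : g ^+ 2 = A * ln t^-1 + 1 by rewrite /g sqr_sqrtr.
set E := C `&` [set x | l * g < `|f x|].
have mE : measurable E := mlvl (l * g).
have Hle : ((t^-1)%:E * mu E <= 1)%E.
  apply: le_trans hint.
  rewrite -(integral_cst mu mE).
  apply: (@le_trans _ _ (\int[mu]_(x in E) (Phi2A A (`|f x| / l))%:E)%E).
    apply: ge0_le_integral => //.
    - by move=> x _; rewrite /= lee_fin invr_ge0 ltW.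
    - exact: (measurable_funS mC (@subIsetl _ _ _) (mPhi l)).
    move=> x [Cx /= hx]; rewrite lee_fin.
    have ug : g < `|f x| / l by rewrite ltr_pdivlMr // mulrC.
    have u1 : ~~ (`|f x| / l <= 1).
      by rewrite -ltNge; apply: lt_trans ug.
    rewrite /Phi2A (negbTE u1).
    rewrite -[X in X <= _](@lnK R t^-1); last by rewrite posrE; apply: lt_trans ti1.
    rewrite ler_expR.
    have -> : ln t^-1 = (g ^+ 2 - 1) / A.
      by rewrite gsq addrK mulrC mulKf // gt_eqF.
    rewrite ler_pM2r ?invr_gt0 // lerD2r ler_sqr ?ltW //.
    - by rewrite nnegrE ltW.
    - by rewrite nnegrE divr_ge0 // ltW.
  apply: ge0_subset_integral => //.
  - exact: mPhi.
  - by move=> x _; rewrite lee_fin Phi2A_ge0.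
  - exact: subIsetl.
have mE0 : (0 <= mu E)%E by exact: measure_ge0.
have mE1 : (mu E <= 1)%E by exact: distrib_le1.
have mEfin : mu E = (fine (mu E))%:E.
  by rewrite fineK // ge0_fin_numE // (le_lt_trans mE1) // ltey.
rewrite /distrib -/g -/E mEfin lee_fin.
rewrite mEfin -EFinM lee_fin in Hle.
have : t * t^-1 = 1 by rewrite mulfV // gt_eqF.
move: mE0; rewrite mEfin lee_fin => mE0.
nra.
Qed.

Lemma part1 : (norm1 mu A f <= luxnorm mu A f)%E.
Proof.
apply: ge_ereal_sup => _ [t /andP[t0 t1] <-].
apply: le_ereal_inf_tmp => _ [l [l0 hint] <-].
set g := Num.sqrt (A * ln t^-1 + 1).
have ti1 : 1 < t^-1 by rewrite invf_gt1.
have lnpos : 0 < ln t^-1 by apply: ln_gt0.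
have g1 : 1 < g.
  rewrite /g -[X in X < _]sqrtr1 ltr_sqrt; last by have := mulr_gt0 A0 lnpos; lra.
  by rewrite ltrDr mulr_gt0.
have g0 : 0 < g by apply: lt_trans g1.
have hr : (rearr mu f t <= (l * g)%:E)%E.
  apply: ereal_inf_le; exists (l * g)%:E => //; exists (l * g) => //; split.
    by rewrite mulr_ge0 // ltW.
  by apply: cheb => //; rewrite t0 t1.
apply: le_trans (lee_wpmul2r _ hr) _; first by rewrite lee_fin invr_ge0 ltW.
by rewrite -EFinM mulfK // gt_eqF.
Qed.

Lemma tail (M sg : R) : 0 < M -> (norm1 mu A f < M%:E)%E -> 1 < sg ->
  (distrib mu f (sg * M) <= (expR (- (sg ^+ 2 - 1) / A))%:E)%E.
Proof.
move=> M0 hM sg1.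
have sg0 : 0 < sg by apply: lt_trans sg1.
set t := expR (- (sg ^+ 2 - 1) / A).
have X0 : 0 < sg ^+ 2 - 1 by rewrite expr2; nra.
have t0 : 0 < t := expR_gt0 _.
have t1 : t < 1.
  by rewrite /t -[X in _ < X]expR0 ltr_expR mulNr oppr_lt0; apply: divr_gt0.
have lnt : ln t^-1 = (sg ^+ 2 - 1) / A by rewrite /t -expRN expRK mulNr opprK.
have gs : Num.sqrt (A * ln t^-1 + 1) = sg.
  by rewrite lnt mulrC divfK ?gt_eqF // subrK sqrtr_sqr gtr0_norm.
have hle : (rearr mu f t * (sg^-1)%:E <= norm1 mu A f)%E.
  by apply: ereal_sup_ubound; exists t; [by apply/andP | by rewrite gs].
have hlt : (rearr mu f t < (M * sg)%:E)%E.
  move: (le_lt_trans hle hM); case E: (rearr mu f t) => [r| |] //=.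
  - by rewrite -EFinM !lte_fin ltr_pdivrMr.
  - by rewrite gt0_mulye ?lte_fin ?invr_gt0.
  - by move=> _; exact: ltNyr.
have [y [s [s0 hs] <-] ys] := ereal_inf_lt hlt.
rewrite lte_fin in ys.
apply: le_trans _ hs; apply: distrib_anti.
by rewrite mulrC ltW.
Qed.

Definition sig (k : nat) : R :=
  match k with 0 => -1 | 1 => 1 | k'.+2 => k'.+2%:R end.
Definition cc (k : nat) : R :=
  match k with 0 => 1/16 | 1 => 3/16 | k'.+2 => Phi2A A (k'.+3%:R / 4) end.

Lemma cc_ge0 k : 0 <= cc k.
Proof. case: k => [|[|k]] /=; try lra. exact: Phi2A_ge0. Qed.

Lemma indic01 (T : Type) (E : set T) x : 0 <= \1_E x :> R.
Proof. by rewrite indicE; case: (x \in E). Qed.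

Lemma exists_k (u : R) : 2 < u -> exists k : nat, k.+2%:R < u <= k.+3%:R.
Proof.
move=> u2.
have ex : exists N : nat, u <= N.+3%:R.
  exists (Num.trunc u).
  have u0 : 0 <= u by lra.
  have := truncn_itv u0; move=> /andP[_ h].
  apply: (le_trans (ltW h)); rewrite ler_nat; lia.
case: (ex_minnP ex) => N hN hmin.
case: N hN hmin => [|N] hN hmin.
  by exists 0%N; rewrite hN andbT.
exists N.+1; rewrite hN andbT.
rewrite ltNge; apply/negP => h.
by have := hmin N h; lia.
Qed.

Lemma part2 (M : R) : 0 < M -> (norm1 mu A f < M%:E)%E ->
  (\int[mu]_(x in C) (Phi2A A (`|f x| / (4 * M)))%:E <= 1)%E.
Proof.
move=> M0 hM.
pose G k := C `&` [set x | sig k * M < `|f x|].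
have mG k : measurable (G k) := mlvl _.
pose bb k x := (cc k * \1_(G k) x)%:E.
have bb0 k x : (0 <= bb k x)%E by rewrite lee_fin mulr_ge0 // ?cc_ge0 // indic01.
have mbb k : measurable_fun C (bb k).
  apply/measurable_EFinP; apply: measurable_funM => //.
apply: (@le_trans _ _ (\int[mu]_(x in C) \sum_(0 <= k <oo) bb k x)%E).
  apply: ge0_le_integral => //.
  - by move=> x _; rewrite lee_fin Phi2A_ge0.
  - exact: mPhi.
  - exact: (@ge0_emeasurable_sum _ _ R C bb xpredT (fun k x _ _ => bb0 k x) (fun k _ => mbb k)).
  move=> x Cx.
  set u := `|f x| / M.
  have u0 : 0 <= u by rewrite divr_ge0 // ltW.
  have -> : `|f x| / (4 * M) = u / 4 by rewrite /u invfM mulrA mulrAC.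
  have bbE k : sig k < u -> bb k x = (cc k)%:E.
    move=> hk; rewrite /bb indicE mem_set ?mulr1 //; split => //=.
    by rewrite -ltr_pdivlMr.
  have sum0 N : (0 <= \sum_(0 <= i < N) bb i x)%E by apply: sume_ge0 => i _; exact: bb0.
  case: (leP u 2) => hu.
  + apply: (@le_trans _ _ (\sum_(0 <= i < 2) bb i x)%E); last first.
      exact: (@nneseries_lim_ge R (fun k => bb k x) xpredT 0 2 (fun n _ _ => bb0 n x)).
    rewrite big_nat_recr //= big_nat1 (bbE 0%N) /=; last by rewrite (lt_le_trans _ u0) // ltrN10.
    have u41 : u / 4 <= 1 by rewrite ler_pdivrMr //; lra.
    rewrite /Phi2A u41.
    case: (leP u 1) => hu1.
      apply: lee_paddr; first exact: bb0.
      rewrite lee_fin /=; rewrite expr2; nra.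
    rewrite bbE //= -EFinD lee_fin expr2; nra.
  + have [k /andP[hk1 hk2]] := exists_k _ hu.
    apply: (@le_trans _ _ (\sum_(0 <= i < k.+3) bb i x)%E); last first.
      exact: (@nneseries_lim_ge R (fun k => bb k x) xpredT 0 k.+3 (fun n _ _ => bb0 n x)).
    rewrite big_nat_recr //= (bbE k.+2) //.
    apply: lee_paddl; first exact: sum0.
    rewrite lee_fin /=; apply: Phi2A_le => //; first by rewrite divr_ge0.
    by rewrite ler_pM2r.
rewrite integral_nneseries //.
have int_bb k : (\int[mu]_(x in C) bb k x = (cc k)%:E * distrib mu f (sig k * M))%E.
  rewrite /bb (integralZl_indic mC (fun _ => G k)) //; last first.
    by move=> h; have := cc_ge0 k; rewrite leNgt h.
  rewrite integral_indic // setIidl //; exact: subIsetl.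
rewrite (eq_eseriesr (fun k _ => int_bb k)).
apply: le_trans (@lee_nneseries R _ (fun k => (hseq R k)%:E) xpredT 0 _ _) _.
- move=> k _ _; rewrite mule_ge0 // ?lee_fin ?cc_ge0 //; exact: distrib_ge0.
- case=> [|[|k]] _ /=.
  + rewrite -[X in (_ <= X)%E]mule1; apply: lee_wpmul2l; first by rewrite lee_fin; lra.
    exact: distrib_le1.
  + rewrite -[X in (_ <= X)%E]mule1; apply: lee_wpmul2l; first by rewrite lee_fin; lra.
    exact: distrib_le1.
  + have s1 : 1 < k.+2%:R :> R by rewrite ltr1n.
    apply: le_trans (lee_wpmul2l _ (tail _ _ M0 hM s1)) _.
      by rewrite lee_fin Phi2A_ge0.
    by rewrite -EFinM lee_fin; apply: term_bound.
- apply: lime_le.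
    apply: is_cvg_nneseries => k _ _; rewrite lee_fin; exact: hseq_ge0.
  apply: nearW => N.
  rewrite sumEFin lee_fin.
  apply: le_trans (hseq_sum R N) _; lra.
Qed.

End Main.


Theorem theorem4p9 (R : realType) (n : nat)
    (mu : {measure set (n.-tuple R) -> \bar R})
    (A : R) (f : n.-tuple R -> R) :
  is_lebesgue_measure_n mu ->
  0 < A -> A <= 1 ->
  measurable_fun (unit_cube R n) f ->
  (norm1 mu A f <= luxnorm mu A f /\ luxnorm mu A f <= 4%:E * norm1 mu A f)%E.
Proof.
move=> hmu A0 A1 mf.
split; first by apply: part1.
have n0 : (0 <= norm1 mu A f)%E.
  have r0 : (0 <= rearr mu f (1/2))%E.
    by apply: le_ereal_inf_tmp => _ [s [s0 _] <-]; rewrite lee_fin.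
  apply: le_trans (_ : (0 <= rearr mu f (1/2) *
     ((Num.sqrt (A * ln (1/2)^-1 + 1))^-1)%:E)%E) _.
    by rewrite mule_ge0 // lee_fin invr_ge0 sqrtr_ge0.
  by apply: ereal_sup_ubound; exists (1/2) => //; apply/andP; split; lra.
have lux4 (M : R) : 0 < M -> (norm1 mu A f < M%:E)%E -> (luxnorm mu A f <= (4 * M)%:E)%E.
  move=> M0 hM; apply: ereal_inf_le; exists (4 * M)%:E => //; exists (4 * M) => //.
  split; first by rewrite mulr_gt0.
  by apply: part2.
move: n0; case E: (norm1 mu A f) => [r| |] //= r0.
- rewrite lee_fin in r0.
  apply/lee_addgt0Pr => e e0.
  have := lux4 (r + e / 4).
  rewrite -EFinM -EFinD.
  have -> : 4 * (r + e / 4) = 4 * r + e by field.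
  apply; first lra.
  by rewrite E lte_fin; lra.
- by rewrite mulry gtr0_sg // mul1e leey.
Qed.
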